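(* Let $\Omega\subsetneq\mathbb{S}^m$ be a domain and $\rho\in C^1(\Omega)$. Then the associated map $\phi:\Omega\to\mathbb{H}^{m+1}$ is proper if and only if, for every $p\in\partial\Omega$, $$\lim_{x\to p}\big(\rho(x)^2+|\nabla\rho(x)|^2\big)=+\infty .$$
   Context: $\mathbb{S}^m\subset\mathbb{R}^{m+1}$ is the unit sphere with round metric $g_0$; $\nabla$ and $|\cdot|$ denote gradient and norm with respect to $g_0$ (so $\nabla\rho(x)\in T_x\mathbb{S}^m\subset\mathbb{R}^{m+1}$). Let $\mathbb{L}^{m+2}$ be $\mathbb{R}^{m+2}$ with the Lorentzian inner product $\langle\!\langle x,y\rangle\!\rangle=-x_0y_0+\sum_{i=1}^{m+1}x_iy_i$, and $\mathbb{H}^{m+1}=\{x\in\mathbb{L}^{m+2}:\langle\!\langle x,x\rangle\!\rangle=-1,\ x_0>0\}$ (hyperboloid model of hyperbolic space). For a domain $\Omega\subset\mathbb{S}^m$ and $\rho\in C^1(\Omega)$, the associated map $\phi=\phi^\rho:\Omega\to\mathbb{H}^{m+1}$ is $$\phi(x)=\frac{e^{\rho(x)}}{2}\Big(1+e^{-2\rho(x)}\big(1+|\nabla\rho(x)|^2\big)\Big)(1,x)+e^{-\rho(x)}\big(0,-x+\nabla\rho(x)\big).$$ A map is proper if preimages of compact subsets of $\mathbb{H}^{m+1}$ are compact in $\Omega$. *)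

(* Defs.v *)
From Stdlib Require Import Reals Lra Lia.
Open Scope R_scope.

(* Points of R^n are represented as functions nat -> R whose coordinates
   with index >= n vanish. Coordinates are indexed 0..n-1. *)
Definition vec := nat -> R.

Fixpoint sumR (n : nat) (f : nat -> R) : R :=
  match n with O => 0 | S k => sumR k f + f k end.

Definition inR (n : nat) (x : vec) : Prop := forall i, (n <= i)%nat -> x i = 0.

Definition dot (n : nat) (x y : vec) : R := sumR n (fun i => x i * y i).
Definition vnorm (n : nat) (x : vec) : R := sqrt (dot n x x).
Definition vsub (x y : vec) : vec := fun i => x i - y i.
Definition dist (n : nat) (x y : vec) : R := vnorm n (vsub x y).

Definition sphere (m : nat) (x : vec) : Prop := inR (S m) x /\ dot (S m) x x = 1.

Definition lorentz (m : nat) (x y : vec) : R :=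
  - x 0%nat * y 0%nat + sumR (S m) (fun i => x (S i) * y (S i)).

Definition hyperbolic (m : nat) (y : vec) : Prop :=
  inR (S (S m)) y /\ lorentz m y y = -1 /\ y 0%nat > 0.

Definition rel_open (m : nat) (U : vec -> Prop) : Prop :=
  forall x, U x -> exists r, r > 0 /\ forall y, sphere m y -> dist (S m) y x < r -> U y.

Definition is_domain (m : nat) (Omega : vec -> Prop) : Prop :=
  (forall x, Omega x -> sphere m x) /\
  rel_open m Omega /\
  (exists x, Omega x) /\
  (forall U V : vec -> Prop,
      rel_open m U -> rel_open m V ->
      (forall x, Omega x -> U x \/ V x) ->
      (forall x, Omega x -> U x -> V x -> False) ->
      (exists x, Omega x /\ U x) -> (exists x, Omega x /\ V x) -> False).

(* grad is the (spherical, round-metric) gradient of rho on Omega: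
   grad x is tangent to S^m at x and is the differential of rho at x
   along the sphere, i.e. rho y = rho x + <grad x, y - x> + o(|y - x|)
   for y in Omega, y -> x. *)
Definition is_sph_gradient (m : nat) (Omega : vec -> Prop) (rho : vec -> R) (grad : vec -> vec) : Prop :=
  forall x, Omega x ->
    inR (S m) (grad x) /\ dot (S m) (grad x) x = 0 /\
    forall eps, eps > 0 -> exists delta, delta > 0 /\
      forall y, Omega y -> dist (S m) y x < delta ->
        Rabs (rho y - rho x - dot (S m) (grad x) (vsub y x)) <= eps * dist (S m) y x.

Definition C1_on_sphere (m : nat) (Omega : vec -> Prop) (rho : vec -> R) (grad : vec -> vec) : Prop :=
  is_sph_gradient m Omega rho grad /\
  forall x, Omega x -> forall eps, eps > 0 -> exists delta, delta > 0 /\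
    forall y, Omega y -> dist (S m) y x < delta -> dist (S m) (grad y) (grad x) < eps.

(* the associated map phi : Omega -> H^{m+1}:
   phi(x) = e^rho/2 (1 + e^{-2 rho}(1 + |grad rho|^2)) (1, x) + e^{-rho} (0, -x + grad rho) *)
Definition assoc_map (m : nat) (rho : vec -> R) (grad : vec -> vec) (x : vec) : vec :=
  let c := exp (rho x) / 2 * (1 + exp (-2 * rho x) * (1 + vnorm (S m) (grad x) ^ 2)) in
  fun i => match i with
           | O => c * 1 + exp (- rho x) * 0
           | S j => c * x j + exp (- rho x) * (- x j + grad x j)
           end.

Definition seq_compact (n : nat) (K : vec -> Prop) : Prop :=
  forall u : nat -> vec, (forall k, K (u k)) ->
    exists (sub : nat -> nat) (l : vec),
      (forall k, (sub k < sub (S k))%nat) /\ K l /\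
      forall eps, eps > 0 -> exists N, forall k, (N <= k)%nat -> dist n (u (sub k)) l < eps.

Definition proper_map (m : nat) (Omega : vec -> Prop) (f : vec -> vec) : Prop :=
  forall K : vec -> Prop,
    (forall y, K y -> hyperbolic m y) -> seq_compact (S (S m)) K ->
    seq_compact (S m) (fun x => Omega x /\ K (f x)).

Definition boundary_pt (m : nat) (Omega : vec -> Prop) (p : vec) : Prop :=
  sphere m p /\ ~ Omega p /\
  forall r, r > 0 -> exists x, Omega x /\ dist (S m) x p < r.

Definition tends_to_infty_at (m : nat) (Omega : vec -> Prop) (F : vec -> R) (p : vec) : Prop :=
  forall M, exists delta, delta > 0 /\
    forall x, Omega x -> dist (S m) x p < delta -> F x > M.

(* Main.v *)
From Stdlib Require Import Reals Lra Lia Psatz Classical FunctionalExtensionality ClassicalEpsilon.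
Require Import Defs.
Open Scope R_scope.

Lemma sumR_ext n f g : (forall i, (i < n)%nat -> f i = g i) -> sumR n f = sumR n g.
Proof. induction n; simpl; intros H; auto. rewrite IHn; [rewrite H|]; auto; intros; apply H; lia. Qed.

Lemma sumR_nonneg n f : (forall i, (i < n)%nat -> 0 <= f i) -> 0 <= sumR n f.
Proof. induction n; simpl; intros H; [lra|]. assert (0 <= f n) by (apply H; lia).
 assert (0 <= sumR n f) by (apply IHn; intros; apply H; lia). lra. Qed.

Lemma sumR_term_le n f i : (forall j, (j < n)%nat -> 0 <= f j) -> (i < n)%nat -> f i <= sumR n f.
Proof. induction n; simpl; intros H Hi; [lia|].
 assert (0 <= f n) by (apply H; lia).
 assert (0 <= sumR n f) by (apply sumR_nonneg; intros; apply H; lia).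
 destruct (Nat.eq_dec i n). subst; lra.
 assert (f i <= sumR n f) by (apply IHn; [intros; apply H; lia| lia]). lra. Qed.

Lemma sumR_le n f g : (forall i, (i < n)%nat -> f i <= g i) -> sumR n f <= sumR n g.
Proof. induction n; simpl; intros H; [lra|]. assert (f n <= g n) by (apply H; lia).
 assert (sumR n f <= sumR n g) by (apply IHn; intros; apply H; lia). lra. Qed.

Lemma cv_const c : Un_cv (fun _ => c) c.
Proof. intros e He. exists 0%nat. intros. unfold Rdist. rewrite Rminus_diag, Rabs_R0. lra. Qed.

Lemma sumR_cv n (f : nat -> vec) l :
  (forall i, (i < n)%nat -> Un_cv (fun k => f k i) (l i)) ->
  Un_cv (fun k => sumR n (f k)) (sumR n l).
Proof. induction n; simpl; intros H. apply cv_const.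
 apply CV_plus. apply IHn; intros; apply H; lia. apply H; lia. Qed.

Lemma sq_nonneg a : 0 <= a * a.
Proof. apply Rle_0_sqr. Qed.

Definition conv n (u : nat -> vec) l := forall eps, eps > 0 -> exists N, forall k, (N <= k)%nat -> dist n (u k) l < eps.
Definition ccv n (u : nat -> vec) l := forall i, (i < n)%nat -> Un_cv (fun k => u k i) (l i).
Definition incr (sub : nat -> nat) := forall k, (sub k < sub (S k))%nat.

Lemma dot_nonneg n x : 0 <= dot n x x.
Proof. apply sumR_nonneg. intros; nra. Qed.

Lemma coord_le_dist n x y i : (i < n)%nat -> Rabs (x i - y i) <= dist n x y.
Proof. intros Hi. unfold dist, vnorm, dot, vsub.
 rewrite <- sqrt_Rsqr_abs. apply sqrt_le_1_alt. unfold Rsqr.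
 apply (sumR_term_le n (fun j => (x j - y j) * (x j - y j)) i). intros j _; cbv beta. apply Rle_0_sqr. exact Hi. Qed.

Lemma conv_ccv n u l : conv n u l -> ccv n u l.
Proof. intros H i Hi e He. destruct (H e He) as [N HN]. exists N. intros k Hk.
 unfold Rdist. eapply Rle_lt_trans. apply (coord_le_dist n). exact Hi. apply HN; lia. Qed.

Lemma ccv_conv n u l : ccv n u l -> conv n u l.
Proof. intros H e He.
 assert (Hs : Un_cv (fun k => sumR n (fun i => (u k i - l i) * (u k i - l i))) (sumR n (fun i => 0))).
 { apply (sumR_cv n (fun k i => (u k i - l i) * (u k i - l i))). intros i Hi.
   replace 0 with ((l i - l i) * (l i - l i)) by ring.
   apply CV_mult; apply CV_minus; try apply H; auto; apply cv_const. }
 assert (Z : forall n, sumR n (fun _ => 0) = 0). { induction n0; simpl; auto. rewrite IHn0; ring. }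
 rewrite Z in Hs. destruct (Hs (e*e)) as [N HN]. nra. exists N. intros k Hk.
 specialize (HN k Hk). unfold Rdist in HN. rewrite Rminus_0_r in HN.
 unfold dist, vnorm, dot, vsub. rewrite Rabs_right in HN.
 2: { apply Rle_ge, sumR_nonneg; intros; apply sq_nonneg. }
 rewrite <- (sqrt_square e) by lra. apply sqrt_lt_1_alt. split; [apply sumR_nonneg; intros; apply sq_nonneg| exact HN]. Qed.

Lemma incr_ge sub : incr sub -> forall k, (k <= sub k)%nat.
Proof. intros H; induction k; [lia|]. specialize (H k); lia. Qed.

Lemma incr_mono sub : incr sub -> forall a b, (a <= b)%nat -> (sub a <= sub b)%nat.
Proof. intros H a b Hab; induction Hab; [lia|]. specialize (H m); lia. Qed.

Lemma incr_comp s1 s2 : incr s1 -> incr s2 -> incr (fun k => s1 (s2 k)).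
Proof. intros H1 H2 k. specialize (H2 k). 
 assert (S (s2 k) <= s2 (S k))%nat by lia.
 pose proof (incr_mono s1 H1 _ _ H). specialize (H1 (s2 k)). lia. Qed.

Lemma cv_sub u l sub : incr sub -> Un_cv u l -> Un_cv (fun k => u (sub k)) l.
Proof. intros Hs H e He. destruct (H e He) as [N HN]. exists N. intros k Hk.
 apply HN. pose proof (incr_ge sub Hs k). lia. Qed.

Lemma ccv_sub n u l sub : incr sub -> ccv n u l -> ccv n (fun k => u (sub k)) l.
Proof. intros Hs H i Hi. apply (cv_sub (fun k => u k i)); auto. Qed.

Lemma conv_sub n u l sub : incr sub -> conv n u l -> conv n (fun k => u (sub k)) l.
Proof. intros Hs H e He. destruct (H e He) as [N HN]. exists N. intros k Hk.
 apply HN. pose proof (incr_ge sub Hs k). lia. Qed.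

Lemma choice_nat (P : nat -> nat -> Prop) :
  (forall N k, exists p, (N <= p)%nat /\ P k p) ->
  exists f : nat -> nat -> nat, forall N k, (N <= f N k)%nat /\ P k (f N k).
Proof. intros H.
 exists (fun N k => proj1_sig (constructive_indefinite_description _ (H N k))).
 intros N k. exact (proj2_sig (constructive_indefinite_description _ (H N k))). Qed.

Lemma BW1 (u : nat -> R) B : (forall k, Rabs (u k) <= B) ->
  exists sub l, incr sub /\ Un_cv (fun k => u (sub k)) l.
Proof. intros HB.
 destruct (Bolzano_Weierstrass u (fun c => -B <= c <= B) (compact_P3 _ _)) as [l Hl].
 { intros k; specialize (HB k); unfold Rabs in HB; destruct (Rcase_abs (u k)); lra. }
 assert (H : forall N k, exists p, (N <= p)%nat /\ Rabs (u p - l) < / INR (S k)).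
 { intros N k. assert (Hp : 0 < / INR (S k)) by (apply Rinv_0_lt_compat, lt_0_INR; lia).
   destruct (Hl (disc l (mkposreal _ Hp)) N) as [p [Hp1 Hp2]].
   - exists (mkposreal _ Hp). intros y Hy; exact Hy.
   - exists p; split; auto. }
 destruct (choice_nat _ H) as [f Hf].
 set (sub := fix sub k := match k with O => f O O | S k' => f (S (sub k')) (S k') end).
 exists sub, l. split.
 - intros k. simpl. destruct (Hf (S (sub k)) (S k)). lia.
 - intros e He. destruct (archimed_cor1 e He) as [N [HN1 HN2]].
   exists N. intros k Hk. unfold Rdist.
   assert (Hk' : Rabs (u (sub k) - l) < / INR (S k)).
   { destruct k; simpl; [apply (Hf O O)| apply (Hf (S (sub k)) (S k))]. }
   eapply Rlt_trans. exact Hk'. eapply Rle_lt_trans; [|exact HN1].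
   apply Rinv_le_contravar. apply lt_0_INR; lia. apply le_INR; lia. Qed.

Lemma BWn n (u : nat -> vec) B : (forall k i, (i < n)%nat -> Rabs (u k i) <= B) ->
  exists sub l, incr sub /\ inR n l /\ ccv n (fun k => u (sub k)) l.
Proof. revert u. induction n; intros u HB.
 - exists (fun k => k), (fun _ => 0). split; [intros k; lia|]. split; [intros i _; auto|].
   intros i Hi; lia.
 - destruct (IHn u) as [s1 [l1 [Hs1 [Hl1 Hc1]]]]. { intros; apply HB; lia. }
   destruct (BW1 (fun k => u (s1 k) n) B) as [s2 [a [Hs2 Hc2]]]. { intros; apply HB; lia. }
   exists (fun k => s1 (s2 k)), (fun i => if Nat.eq_dec i n then a else l1 i).
   split; [apply incr_comp; auto|]. split.
   + intros i Hi. destruct (Nat.eq_dec i n); [lia|]. apply Hl1; lia.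
   + intros i Hi. destruct (Nat.eq_dec i n).
     * subst. exact Hc2.
     * apply (ccv_sub n (fun k => u (s1 k)) l1 s2 Hs2 Hc1). lia. Qed.

Lemma exp_facts r : exp (-2*r) = exp (-r) * exp (-r) /\ exp r * exp (-r) = 1.
Proof. split. rewrite <- exp_plus; f_equal; ring. rewrite <- exp_plus, <- exp_0; f_equal; ring. Qed.

Lemma le_exp x : x <= exp x.
Proof. destruct (Rle_dec x 0). pose proof (exp_pos x); lra.
 pose proof (exp_ineq1 x); lra. Qed.

Lemma phi0_le r G M : 0 <= G -> r^2 + G <= M ->
  exp r / 2 * (1 + exp (-2*r) * (1+G)) <= exp (1+M) * (2+M) / 2.
Proof. intros HG HM. destruct (exp_facts r) as [H1 H2]. rewrite H1.
 assert (Hr : Rabs r <= 1 + M). { unfold Rabs; destruct (Rcase_abs r); nra. }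
 assert (E1 : exp r <= exp (1+M)). { destruct (Rle_lt_or_eq_dec r (1+M)); [unfold Rabs in Hr; destruct (Rcase_abs r); lra| left; apply exp_increasing; auto| subst; lra]. }
 assert (E2 : exp (-r) <= exp (1+M)). { destruct (Rle_lt_or_eq_dec (-r) (1+M)); [unfold Rabs in Hr; destruct (Rcase_abs r); lra| left; apply exp_increasing; auto| rewrite e; lra]. }
 pose proof (exp_pos r). pose proof (exp_pos (-r)).
 replace (exp r / 2 * (1 + exp (- r) * exp (- r) * (1 + G))) with ((exp r + exp (-r) * (exp r * exp (-r)) * (1+G))/2) by field.
 rewrite H2. assert (G <= M) by nra. nra. Qed.

Lemma phi0_ge r G B : 0 <= G -> exp r / 2 * (1 + exp (-2*r) * (1+G)) <= B -> r^2 + G <= 8 * B^2.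
Proof. intros HG HB. destruct (exp_facts r) as [H1 H2]. rewrite H1 in HB.
 replace (exp r / 2 * (1 + exp (- r) * exp (- r) * (1 + G))) with ((exp r + exp (-r) * (exp r * exp (-r)) * (1+G))/2) in HB by field.
 rewrite H2 in HB. pose proof (exp_pos r). pose proof (exp_pos (-r)).
 pose proof (le_exp r). pose proof (le_exp (-r)).
 assert (exp r <= 2*B) by nra. assert (exp (-r) <= 2*B) by nra.
 assert (exp (-r) * G <= 2*B) by nra.
 assert (G <= 4*B^2). { replace G with (exp r * (exp (-r) * G)) by (rewrite <- Rmult_assoc, H2; ring). nra. }
 assert (r^2 <= 4*B^2) by nra. lra. Qed.

Lemma vnorm_sq n g : vnorm n g ^ 2 = dot n g g.
Proof. unfold vnorm. apply pow2_sqrt, dot_nonneg. Qed.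

Lemma sum_sq_lemma n (x g : vec) a b :
  sumR n (fun i => (a * x i + b * (- x i + g i)) * (a * x i + b * (- x i + g i))) =
  (a-b)^2 * dot n x x + 2*(a-b)*b * dot n g x + b^2 * dot n g g.
Proof. unfold dot; induction n; simpl. ring. rewrite IHn. ring. Qed.

Lemma alg_id E e D : E * e = 1 ->
  - ((E + e*(1+D))/2) * ((E + e*(1+D))/2) + (((E + e*(1+D))/2 - e)^2*1 + 2*((E+e*(1+D))/2 - e)*e*0 + e^2*D) = -1.
Proof. intros H. replace (-1) with (-(E*e)) by (rewrite H; ring). field. Qed.

Lemma phi_hyp m rho grad x : sphere m x -> inR (S m) (grad x) -> dot (S m) (grad x) x = 0 ->
  hyperbolic m (assoc_map m rho grad x).
Proof. intros [Hx1 Hx2] Hg1 Hg2. unfold hyperbolic. split; [|split].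
 - unfold assoc_map; intros [|j] Hj; [lia|]. rewrite (Hx1 j), (Hg1 j) by lia. ring.
 - unfold lorentz.
   set (c := exp (rho x) / 2 * (1 + exp (-2 * rho x) * (1 + vnorm (S m) (grad x) ^ 2))).
   set (e := exp (- rho x)).
   assert (A0 : assoc_map m rho grad x 0%nat = c) by (unfold assoc_map, c; ring).
   rewrite A0.
   rewrite (sumR_ext _ _ (fun i => (c * x i + e * (- x i + grad x i)) * (c * x i + e * (- x i + grad x i)))) by (intros; reflexivity).
   rewrite sum_sq_lemma. rewrite Hx2, Hg2.
   assert (Hc : c = (exp (rho x) + e * (1 + dot (S m) (grad x) (grad x))) / 2).
   { unfold c, e. rewrite vnorm_sq. destruct (exp_facts (rho x)) as [H1 H2]. rewrite H1.
     replace (exp (rho x) / 2 * (1 + exp (- rho x) * exp (- rho x) * (1 + dot (S m) (grad x) (grad x))))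
     with ((exp (rho x) + exp (- rho x) * (exp (rho x) * exp (- rho x)) * (1 + dot (S m) (grad x) (grad x)))/2) by field.
     rewrite H2. lra. }
   destruct (exp_facts (rho x)) as [_ H2]. fold e in H2. clearbody c e. subst c. rewrite Hc.
   apply alg_id; auto.
 - unfold assoc_map. pose proof (exp_pos (rho x)). pose proof (exp_pos (-2 * rho x)).
   pose proof (pow2_ge_0 (vnorm (S m) (grad x))). 
   assert (0 < exp (rho x) / 2 * (1 + exp (-2 * rho x) * (1 + vnorm (S m) (grad x) ^ 2))).
   { apply Rmult_lt_0_compat. lra. nra. } lra. Qed.

Lemma sumR_zero n f : (forall i, (i < n)%nat -> f i = 0) -> sumR n f = 0.
Proof. intros H. induction n; simpl; auto. rewrite IHn, H by (intros; try apply H; lia). ring. Qed.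

Lemma cv_ext a b A : (forall k, a k = b k) -> Un_cv a A -> Un_cv b A.
Proof. intros H Ha e He. destruct (Ha e He) as [N HN]. exists N; intros k Hk; rewrite <- H; auto. Qed.

Lemma cv_opp' a A : Un_cv a A -> Un_cv (fun k => - a k) (- A).
Proof. intros H. apply (CV_opp a A H). Qed.

Lemma cv_div a A c : Un_cv a A -> Un_cv (fun k => a k / c) (A / c).
Proof. intros H. unfold Rdiv. apply CV_mult; auto. apply cv_const. Qed.

Lemma cv_exp a A : Un_cv a A -> Un_cv (fun k => exp (a k)) (exp A).
Proof. intros H. apply (continuity_seq exp a A); auto. apply derivable_continuous_pt, derivable_pt_exp. Qed.

Lemma cv_dot n (u w : nat -> vec) U W : ccv n u U -> ccv n w W ->
  Un_cv (fun k => dot n (u k) (w k)) (dot n U W).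
Proof. intros Hu Hw. unfold dot. apply (sumR_cv n (fun k i => u k i * w k i) (fun i => U i * W i)).
 intros i Hi. apply CV_mult; auto. Qed.

Lemma cv_dist n u l : conv n u l -> Un_cv (fun k => dist n (u k) l) 0.
Proof. intros H e He. destruct (H e He) as [N HN]. exists N; intros k Hk. unfold Rdist.
 rewrite Rminus_0_r, Rabs_right. auto. apply Rle_ge. unfold dist, vnorm. apply sqrt_pos. Qed.

Ltac cvt := repeat first [ assumption | apply CV_plus | apply CV_mult | apply CV_minus | apply cv_opp' | apply cv_div
   | apply cv_exp | apply cv_const | assumption ].

Section Cont.
Variables (m : nat) (Omega : vec -> Prop) (rho : vec -> R) (grad : vec -> vec).
Hypothesis HC1 : C1_on_sphere m Omega rho grad.

Lemma rho_cont v l : Omega l -> (forall k, Omega (v k)) -> ccv (S m) v l ->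
  Un_cv (fun k => rho (v k)) (rho l).
Proof. intros Hl Hv Hc. destruct HC1 as [Hg _]. destruct (Hg l Hl) as [_ [_ Hd]].
 destruct (Hd 1 Rlt_0_1) as [delta [Hdel Hdd]].
 pose proof (cv_dist _ _ _ (ccv_conv _ _ _ Hc)) as Hdist.
 assert (Hdot : Un_cv (fun k => dot (S m) (grad l) (vsub (v k) l)) 0).
 { assert (Z : dot (S m) (grad l) (vsub l l) = 0) by (unfold dot, vsub; apply sumR_zero; intros; ring).
   rewrite <- Z. apply cv_dot. intros i _; apply cv_const. intros i Hi. unfold vsub.
   apply CV_minus. apply Hc; auto. apply cv_const. }
 intros e He. destruct (Hdist (Rmin delta (e/2))) as [N1 HN1]. { apply Rmin_glb_lt; lra. }
 destruct (Hdot (e/2)) as [N2 HN2]. lra.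
 exists (N1 + N2)%nat. intros k Hk. specialize (HN1 k ltac:(lia)). specialize (HN2 k ltac:(lia)).
 unfold Rdist in *. rewrite Rminus_0_r in *. rewrite Rabs_right in HN1 by (apply Rle_ge; apply sqrt_pos).
 assert (Hm1 := Rmin_l delta (e/2)). assert (Hm2 := Rmin_r delta (e/2)).
 specialize (Hdd (v k) (Hv k) ltac:(lra)).
 set (d := dot (S m) (grad l) (vsub (v k) l)) in *.
 replace (rho (v k) - rho l) with ((rho (v k) - rho l - d) + d) by ring.
 eapply Rle_lt_trans. apply Rabs_triang. lra. Qed.

Lemma grad_cont v l : Omega l -> (forall k, Omega (v k)) -> ccv (S m) v l ->
  ccv (S m) (fun k => grad (v k)) (grad l).
Proof. intros Hl Hv Hc. apply conv_ccv. destruct HC1 as [_ Hg]. intros e He.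
 destruct (Hg l Hl e He) as [delta [Hdel Hdd]]. destruct (ccv_conv _ _ _ Hc delta Hdel) as [N HN].
 exists N. intros k Hk. apply Hdd; auto. Qed.

Lemma phi_cont v l : Omega l -> (forall k, Omega (v k)) -> ccv (S m) v l ->
  ccv (S (S m)) (fun k => assoc_map m rho grad (v k)) (assoc_map m rho grad l).
Proof. intros Hl Hv Hc. pose proof (rho_cont v l Hl Hv Hc) as Hr.
 pose proof (grad_cont v l Hl Hv Hc) as Hg.
 assert (Hn : Un_cv (fun k => vnorm (S m) (grad (v k)) ^ 2) (vnorm (S m) (grad l) ^ 2)).
 { rewrite vnorm_sq. apply (cv_ext (fun k => dot (S m) (grad (v k)) (grad (v k)))).
   intros; rewrite vnorm_sq; auto. apply cv_dot; auto. }
 intros [|j] Hj; unfold assoc_map; cvt.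
 - apply Hc; lia.
 - apply Hc; lia.
 - apply Hg; lia.
Qed.
End Cont.

Lemma abs_le_of_sq a C : 0 <= C -> a * a <= C * C -> Rabs a <= C.
Proof. intros HC H. unfold Rabs; destruct (Rcase_abs a); nra. Qed.

Lemma sphere_coord m x i : sphere m x -> (i < S m)%nat -> Rabs (x i) <= 1.
Proof. intros [_ H] Hi. apply abs_le_of_sq; [lra|]. rewrite Rmult_1_l, <- H.
 apply (sumR_term_le (S m) (fun j => x j * x j) i); auto. intros; apply sq_nonneg. Qed.

Lemma hyp_y0 m y : hyperbolic m y -> 1 <= y 0%nat /\ 
  y 0%nat * y 0%nat = 1 + sumR (S m) (fun i => y (S i) * y (S i)).
Proof. intros [_ [H1 H2]]. unfold lorentz in H1.
 assert (0 <= sumR (S m) (fun i => y (S i) * y (S i))) by (apply sumR_nonneg; intros; apply sq_nonneg).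
 split; [|lra]. nra. Qed.

Lemma hyp_coord m y C i : hyperbolic m y -> y 0%nat <= C -> (i < S (S m))%nat -> Rabs (y i) <= C.
Proof. intros Hy HC Hi. destruct (hyp_y0 m y Hy) as [H1 H2]. apply abs_le_of_sq; [lra|].
 destruct i as [|j]. nra.
 assert (y (S j) * y (S j) <= sumR (S m) (fun i => y (S i) * y (S i))).
 { apply (sumR_term_le (S m) (fun i => y (S i) * y (S i)) j). intros; apply sq_nonneg. lia. }
 nra. Qed.

Lemma eq_from_ccv n u a b : ccv n u a -> ccv n u b -> inR n a -> inR n b -> a = b.
Proof. intros Ha Hb Ia Ib. apply functional_extensionality. intros i.
 destruct (Nat.lt_ge_cases i n). eapply UL_sequence; [apply Ha| apply Hb]; auto.
 rewrite Ia, Ib; auto. Qed.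

Lemma cv_le_const a A C : (forall k, a k <= C) -> Un_cv a A -> A <= C.
Proof. intros H Ha. apply (@Rle_cv_lim a (fun _ => C) A C); auto. apply cv_const. Qed.

Lemma cv_ge_const a A C : (forall k, C <= a k) -> Un_cv a A -> C <= A.
Proof. intros H Ha. apply (@Rle_cv_lim (fun _ => C) a C A); auto. apply cv_const. Qed.

Lemma K_compact m C : seq_compact (S (S m)) (fun y => hyperbolic m y /\ y 0%nat <= C).
Proof. intros u Hu.
 destruct (BWn (S (S m)) u C) as [sub [l [Hs [Hl Hc]]]].
 { intros k i Hi. destruct (Hu k). apply (hyp_coord m); auto. }
 exists sub, l. split; [auto|]. split; [| apply ccv_conv; auto].
 assert (H0 : Un_cv (fun k => u (sub k) 0%nat) (l 0%nat)) by (apply Hc; lia).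
 split; [split; [auto| split]|].
 - assert (Hlor : Un_cv (fun k => lorentz m (u (sub k)) (u (sub k))) (lorentz m l l)).
   { unfold lorentz. apply CV_plus. apply CV_mult; auto. apply cv_opp'; auto.
     apply (sumR_cv (S m) (fun k i => u (sub k) (S i) * u (sub k) (S i)) (fun i => l (S i) * l (S i))).
     intros i Hi. apply CV_mult; apply Hc; lia. }
   eapply UL_sequence. exact Hlor. apply (cv_ext (fun _ => -1)). intros k. destruct (Hu (sub k)) as [[_ [E _]] _]. auto.
   apply cv_const.
 - assert (1 <= l 0%nat). { apply (cv_ge_const (fun k => u (sub k) 0%nat)); auto. intros k.
     destruct (Hu (sub k)) as [Hy _]. apply (hyp_y0 m _ Hy). } lra.
 - apply (cv_le_const (fun k => u (sub k) 0%nat)); auto. intros k. apply (Hu (sub k)). Qed.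

Lemma phi0_eq m rho grad x : assoc_map m rho grad x 0%nat =
  exp (rho x) / 2 * (1 + exp (-2 * rho x) * (1 + vnorm (S m) (grad x) ^ 2)).
Proof. unfold assoc_map. ring. Qed.

Theorem mainTheorem1 (m : nat) (Omega : vec -> Prop) (rho : vec -> R) (grad : vec -> vec) :
  is_domain m Omega ->
  (exists q, sphere m q /\ ~ Omega q) ->
  C1_on_sphere m Omega rho grad ->
  (proper_map m Omega (assoc_map m rho grad) <->
   forall p, boundary_pt m Omega p ->
     tends_to_infty_at m Omega (fun x => rho x ^ 2 + vnorm (S m) (grad x) ^ 2) p).
Proof.
 intros HD _ HC1. destruct HD as [HOs _].
 assert (Hgr : forall x, Omega x -> inR (S m) (grad x) /\ dot (S m) (grad x) x = 0).
 { intros x Hx. destruct HC1 as [Hg _]. destruct (Hg x Hx) as [A [B _]]; auto. }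
 split.
 - intros Hprop p Hp. apply NNPP. intros Hnot.
   apply not_all_ex_not in Hnot. destruct Hnot as [M HM].
   assert (Hx : forall k : nat, exists x, Omega x /\ dist (S m) x p < / INR (S k) /\
              rho x ^ 2 + vnorm (S m) (grad x) ^ 2 <= M).
   { intros k. apply NNPP. intros Hk. apply HM. exists (/ INR (S k)). split.
     apply Rinv_0_lt_compat, lt_0_INR; lia.
     intros x Hx Hd. apply Rnot_le_gt. intros Hle. apply Hk. exists x; auto. }
   set (xs := fun k => proj1_sig (constructive_indefinite_description _ (Hx k))).
   assert (Hxs : forall k, Omega (xs k) /\ dist (S m) (xs k) p < / INR (S k) /\
              rho (xs k) ^ 2 + vnorm (S m) (grad (xs k)) ^ 2 <= M).
   { intros k. exact (proj2_sig (constructive_indefinite_description _ (Hx k))). }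
   set (C := exp (1+M) * (2+M) / 2).
   destruct (Hprop (fun y => hyperbolic m y /\ y 0%nat <= C) (fun y Hy => proj1 Hy) (K_compact m C) xs) as [sub [l [Hs [[Hl _] Hc]]]].
   + intros k. destruct (Hxs k) as [H1 [_ H3]]. split; auto. split.
     * destruct (Hgr _ H1). apply phi_hyp; auto.
     * rewrite phi0_eq. apply phi0_le; auto. pose proof (pow2_ge_0 (vnorm (S m) (grad (xs k)))); lra.
   + apply (proj1 (proj2 Hp)). replace p with l; auto.
     apply (eq_from_ccv (S m) (fun k => xs (sub k))).
     * apply conv_ccv; auto.
     * apply conv_ccv. intros e He. destruct (archimed_cor1 e He) as [N [HN1 HN2]].
       exists N. intros k Hk. destruct (Hxs (sub k)) as [_ [Hd _]]. eapply Rlt_trans. exact Hd.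
       eapply Rle_lt_trans; [|exact HN1]. pose proof (incr_ge sub Hs k).
       apply Rinv_le_contravar. apply lt_0_INR; lia. apply le_INR; lia.
     * apply (HOs l Hl).
     * apply (proj1 Hp).
 - intros Hinf K HK HKc u Hu.
   destruct (HKc (fun k => assoc_map m rho grad (u k))) as [s1 [ys [Hs1 [HKy Hcy]]]].
   { intros k; apply (Hu k). }
   destruct (BWn (S m) (fun k => u (s1 k)) 1) as [s2 [l [Hs2 [Hl Hcl]]]].
   { intros k i Hi. apply (sphere_coord m); auto. apply HOs, (Hu (s1 k)). }
   set (v := fun k => u (s1 (s2 k))).
   assert (HvO : forall k, Omega (v k)) by (intros; apply (Hu (s1 (s2 k)))).
   assert (Hcy' : ccv (S (S m)) (fun k => assoc_map m rho grad (v k)) ys).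
   { apply conv_ccv. apply (conv_sub (S (S m)) (fun k => assoc_map m rho grad (u (s1 k))) ys s2); auto. }
   assert (HOl : Omega l).
   { apply NNPP. intros HnO.
     assert (Hsph : sphere m l).
     { split; auto. eapply UL_sequence. apply (cv_dot (S m) v v l l); auto.
       apply (cv_ext (fun _ => 1)). intros k. symmetry. apply (HOs _ (HvO k)). apply cv_const. }
     set (B := ys 0%nat + 1).
     assert (Hbd : boundary_pt m Omega l).
     { split; auto. split; auto. intros r Hr. destruct (ccv_conv _ _ _ Hcl r Hr) as [N HN].
       exists (v N). split; auto. apply HN; lia. }
     destruct (Hinf l Hbd (8 * B ^ 2)) as [delta [Hdel Hdd]].
     destruct (ccv_conv _ _ _ Hcl delta Hdel) as [N1 HN1].
     destruct (Hcy' 0%nat ltac:(lia) 1 Rlt_0_1) as [N2 HN2].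
     specialize (HN1 (N1 + N2)%nat ltac:(lia)). specialize (HN2 (N1 + N2)%nat ltac:(lia)).
     specialize (Hdd _ (HvO _) HN1). simpl in Hdd.
     assert (Hb : assoc_map m rho grad (v (N1+N2)%nat) 0%nat <= B).
     { unfold Rdist in HN2. unfold B. unfold Rabs in HN2; destruct (Rcase_abs _); lra. }
     rewrite phi0_eq in Hb. apply phi0_ge in Hb. 2: apply pow2_ge_0. simpl in Hb. lra. }
   exists (fun k => s1 (s2 k)), l. split; [apply incr_comp; auto|]. split.
   + split; auto. replace (assoc_map m rho grad l) with ys; auto.
     apply (eq_from_ccv (S (S m)) (fun k => assoc_map m rho grad (v k))); auto.
     * apply (phi_cont m Omega rho grad HC1); auto.
     * apply (HK _ HKy).
     * destruct (Hgr _ HOl). apply phi_hyp; auto.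
   + apply ccv_conv; auto.
Qed.
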